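(* Let $\alpha$ be a composition and $n\ge1$. If $\alpha<_c\beta$ and $\beta/\!\!/\alpha$ is an nc border strip with $n$ boxes, then there exists $w\in CRHW_n$ with $w(\alpha)=\beta$.
   Context: A composition is a finite sequence $\alpha=(\alpha_1,\dots,\alpha_k)$ of positive integers; $\ell(\alpha)=k$. Its diagram is the set of boxes $(i,j)$, $1\le i\le\ell(\alpha)$, $1\le j\le\alpha_i$, rows numbered top to bottom, columns left to right. For compositions $\gamma=(\gamma_1,\dots,\gamma_l)$, $\delta$ write $\gamma\lessdot_c\delta$ if $\delta=(1,\gamma_1,\dots,\gamma_l)$ or $\delta=(\gamma_1,\dots,\gamma_k+1,\dots,\gamma_l)$ for some $k$ with $\gamma_i\neq\gamma_k$ for all $i<k$; $<_c$ is the transitive closure. For $\gamma<_c\delta$, $\delta/\!\!/\gamma$ is the set of boxes of $\delta$ not in the inner shape, the inner shape being the boxes $(\ell(\delta)-\ell(\gamma)+i,j)$, $1\le i\le\ell(\gamma)$, $1\le j\le\gamma_i$. $\mathrm{supp}(\beta/\!\!/\alpha)$ is the set of columns containing a box of $\beta/\!\!/\alpha$; $\beta/\!\!/\alpha$ is an interval shape if this set is a set of consecutive integers. An interval shape is an nc border strip if (1) whenever $(i,1),(i,2)\in\beta/\!\!/\alpha$, the box $(i,1)$ is the bottommost box of column 1 of $\beta/\!\!/\alpha$, and (2) whenever $(i,j),(i,j+1)\in\beta/\!\!/\alpha$ with $j\ge2$, the box $(i,j)$ is the topmost box of column $j$ of $\beta/\!\!/\alpha$. Box-adding operators: $\mathfrak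 t_1(\alpha)=(1,\alpha_1,\dots,\alpha_k)$; for $i\ge2$, $\mathfrak t_i(\alpha)$ increases the leftmost part of $\alpha$ equal to $i-1$ by $1$, and is $0$ if there is no such part; $\mathfrak t_i(0)=0$. A word $w=\mathfrak t_{i_1}\cdots\mathfrak t_{i_n}$ acts by $w(\alpha)=\mathfrak t_{i_1}(\cdots\mathfrak t_{i_n}(\alpha))$. It is a reverse hookword if $i_1\le\cdots\le i_{k+1}>i_{k+2}>\cdots>i_n$ for some $0\le k\le n-1$, connected if $\{i_1,\dots,i_n\}$ is a set of consecutive integers; $CRHW_n$ is the set of connected reverse hookwords of length $n$. *)

(* Defs.v *)
From mathcomp Require Import all_boot.
Set Implicit Arguments. Unset Strict Implicit. Unset Printing Implicit Defensive.

Definition composition (a : seq nat) : bool := all (fun x => 0 < x) a.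

(* gamma <.c delta (0-indexed k) *)
Definition coverc (g d : seq nat) : Prop :=
  d = 1 :: g \/
  exists k, k < size g /\ d = incr_nth g k /\
            (forall i, i < k -> nth 0 g i != nth 0 g k).

Inductive ltc : seq nat -> seq nat -> Prop :=
| ltc_cover g d : coverc g d -> ltc g d
| ltc_step g d e : coverc g d -> ltc d e -> ltc g e.

(* box (i,j) (1-indexed, rows top to bottom) lies in the diagram of b *)
Definition in_diag (b : seq nat) (i j : nat) : bool :=
  [&& 1 <= i, i <= size b, 1 <= j & j <= nth 0 b i.-1].

(* box (i,j) lies in the inner shape of alpha placed at the bottom of beta *)
Definition in_inner (b a : seq nat) (i j : nat) : bool :=
  [&& size b - size a < i, i <= size b, 1 <= j &
      j <= nth 0 a (i - (size b - size a)).-1].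

Definition in_skew (b a : seq nat) (i j : nat) : bool :=
  in_diag b i j && ~~ in_inner b a i j.

Definition in_supp (b a : seq nat) (j : nat) : Prop := exists i, in_skew b a i j.

Definition interval_shape (b a : seq nat) : Prop :=
  forall j1 j j2, j1 <= j <= j2 -> in_supp b a j1 -> in_supp b a j2 -> in_supp b a j.

Definition nc_border_strip (b a : seq nat) : Prop :=
  interval_shape b a /\
  (forall i, in_skew b a i 1 -> in_skew b a i 2 ->
     forall i', in_skew b a i' 1 -> i' <= i) /\
  (forall i j, 2 <= j -> in_skew b a i j -> in_skew b a i j.+1 ->
     forall i', in_skew b a i' j -> i <= i').

Definition skew_size (b a : seq nat) : nat :=
  \sum_(1 <= i < (size b).+1) \sum_(1 <= j < (nth 0 b i.-1).+1) in_skew b a i j.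

(* box-adding operators; None plays the role of 0. Index 0 is not an operator. *)
Definition top (i : nat) (a : seq nat) : option (seq nat) :=
  match i with
  | 0 => None
  | 1 => Some (1 :: a)
  | i'.+1 => if i' \in a then Some (incr_nth a (index i' a)) else None
  end.

(* w = t_{i1} ... t_{in} acts by applying t_{in} first *)
Definition act_word (w : seq nat) (a : seq nat) : option (seq nat) :=
  foldr (fun i acc => obind (top i) acc) (Some a) w.

Definition reverse_hookword (w : seq nat) : Prop :=
  exists k, k < size w /\ sorted leq (take k.+1 w) /\
            sorted (fun x y => y < x) (drop k w).

Definition connected_word (w : seq nat) : Prop :=
  forall x y z, x \in w -> z \in w -> x <= y <= z -> y \in w.

(* w in CRHW_n (letters are operator indices, hence >= 1) *)
Definition CRHW (n : nat) (w : seq nat) : Prop :=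
  size w = n /\ all (fun i => 0 < i) w /\ reverse_hookword w /\ connected_word w.

(* Main.v *)
Require Import Defs.
From mathcomp Require Import all_boot zify.
Set Implicit Arguments. Unset Strict Implicit. Unset Printing Implicit Defensive.

Definition pt (j : nat) (P : seq nat) : option (seq nat) :=
  match j with
  | 0 => None
  | 1 => let z := find (fun x => x != 0) P in
         if z == 0 then None else Some (incr_nth P z.-1)
  | j'.+1 => if j' \in P then Some (incr_nth P (index j' P)) else None
  end.

Definition pact (w : seq nat) (P : seq nat) : option (seq nat) :=
  foldr (fun i acc => obind (pt i) acc) (Some P) w.

Lemma act_cat u v a : act_word (u ++ v) a = obind (act_word u) (act_word v a).
Proof.
rewrite /act_word foldr_cat; case: (foldr _ _ v) => [b|] /=.
  by [].
by elim: u => //= x u ->.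
Qed.

Lemma pact_cat u v a : pact (u ++ v) a = obind (pact u) (pact v a).
Proof.
rewrite /pact foldr_cat; case: (foldr _ _ v) => [b|] /=.
  by [].
by elim: u => //= x u ->.
Qed.

Lemma index_eq_spec (s : seq nat) x i : i < size s -> nth 0 s i = x ->
  (forall k, k < i -> nth 0 s k != x) -> index x s = i.
Proof.
elim: s i => [|y s IH] [|i] //=.
  by move=> _ ->; rewrite eqxx.
move=> Hi Hn Hk; have := Hk 0 erefl; rewrite /= => /negbTE; rewrite eq_sym => ->.
congr S; apply: IH => // k Hk'; exact: (Hk k.+1).
Qed.

Lemma sumn_incr_nth (a : seq nat) k : k < size a -> sumn (incr_nth a k) = (sumn a).+1.
Proof. by elim: a k => [|x a IH] [|k] //= Hk; rewrite IH // addnS. Qed.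

Lemma top_pos j a b : composition a -> top j a = Some b ->
  [/\ composition b, size a <= size b & sumn b = (sumn a).+1].
Proof.
case: j => [|[|j]] //= Ha.
  by case=> <- /=; rewrite Ha /= leqnSn.
case: ifP => // Hin [<-].
have Hlt : index j.+1 a < size a by rewrite index_mem.
split.
- apply/(all_nthP 0) => i; rewrite size_incr_nth Hlt => Hi.
  rewrite nth_incr_nth; move/(all_nthP 0): Ha => /(_ i Hi); lia.
- by rewrite size_incr_nth Hlt.
- exact: sumn_incr_nth.
Qed.

Lemma act_pos w a b : composition a -> act_word w a = Some b ->
  [/\ composition b, size a <= size b & sumn b = sumn a + size w].
Proof.
elim: w b => [|x w IH] b Ha /=.
  by case=> <-; rewrite addn0 leqnn.
rewrite -/(act_word w a); case E: (act_word w a) => [c|] //= Hc.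
have [Hc1 Hc2 Hc3] := IH c Ha E.
have [Hb1 Hb2 Hb3] := top_pos Hc1 Hc.
split => //; first exact: leq_trans Hb2.
by rewrite Hb3 Hc3 addnS.
Qed.

Lemma find_pad m s : composition s -> find (fun x => x != 0) (nseq m 0 ++ s) = m.
Proof.
move=> Hs; rewrite find_cat.
have -> : has (fun x => x != 0) (nseq m 0) = false by elim: m.
rewrite size_nseq; case: s Hs => [|x s] /=; first by rewrite addn0.
by case/andP => Hx _; rewrite -lt0n Hx addn0.
Qed.

Lemma incr_nth_pad m R k : incr_nth (nseq m 0 ++ R) (m + k) = nseq m 0 ++ incr_nth R k.
Proof. by elim: m => //= m ->. Qed.

Lemma incr_nth_pad0 m R : incr_nth (nseq m.+1 0 ++ R) m = nseq m 0 ++ 1 :: R.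
Proof. by elim: m => //= m ->. Qed.

Lemma pad_top j z Q P' : composition Q -> pt j (nseq z 0 ++ Q) = Some P' ->
  exists z' Q', P' = nseq z' 0 ++ Q' /\ top j Q = Some Q'.
Proof.
move=> HQ; case: j => [|[|j]] //=.
  rewrite find_pad //; case: z => [|z] //= [<-].
  by exists z, (1 :: Q); rewrite -incr_nth_pad0.
rewrite mem_cat.
have -> : (j.+1 \in nseq z 0) = false by elim: z.
case: ifP => // Hin [<-].
rewrite index_cat.
have -> : (j.+1 \in nseq z 0) = false by elim: z.
rewrite size_nseq incr_nth_pad.
exists z, (incr_nth Q (index j.+1 Q)); split => //.
by move: Hin => /= ->.
Qed.

Lemma pad_act w z Q P' : composition Q -> pact w (nseq z 0 ++ Q) = Some P' ->
  exists z' Q', P' = nseq z' 0 ++ Q' /\ act_word w Q = Some Q'.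
Proof.
move=> HQ; elim: w P' => [|x w IH] P' /=.
  by case=> <-; exists z, Q.
rewrite -/(pact w _); case E: (pact w _) => [R|] //= HR.
have [z1 [Q1 [ER HQ1]]] := IH R E; subst R.
have [HQ1c _ _] := act_pos HQ HQ1.
have [z2 [Q2 [EP HQ2]]] := pad_top HQ1c HR; subst P'.
exists z2, Q2; split => //.
by rewrite -/(act_word w Q) HQ1.
Qed.

Lemma act_pad w Q Q' : composition Q -> act_word w Q = Some Q' ->
  forall z, size Q' <= z + size Q ->
  pact w (nseq z 0 ++ Q) = Some (nseq (z + size Q - size Q') 0 ++ Q').
Proof.
move=> HQ; elim: w Q' => [|x w IH] Q' /=.
  by case=> <- z _; rewrite addnK.
rewrite -/(act_word w Q); case E: (act_word w Q) => [R|] //= HR z Hz.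
have [HRc HR2 _] := act_pos HQ E.
have [_ HR3 _] := top_pos HRc HR.
rewrite -/(pact w _) (IH R E z (leq_trans HR3 Hz)) /=.
case: x HR => [|[|x]] //=.
  case=> EQ; subst Q' => /=.
  rewrite find_pad //.
  have -> : z + size Q - size R = (z + size Q - (size R).+1).+1.
    by move: Hz => /=; lia.
  by rewrite incr_nth_pad0.
rewrite mem_cat.
have -> : forall m, (x.+1 \in nseq m 0) = false by move=> m; elim: m.
case: ifP => // Hin [<-].
rewrite index_cat.
have -> : forall m, (x.+1 \in nseq m 0) = false by move=> m; elim: m.
rewrite size_nseq incr_nth_pad size_incr_nth.
by have -> : index x.+1 R < size R by rewrite index_mem.
Qed.

Lemma pt_spec j P P' : pt j P = Some P' ->
  exists q, [/\ P' = incr_nth P q, q < size P &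
   (j = 1 /\ nth 0 P q = 0) \/
   [/\ 2 <= j, nth 0 P q = j.-1 & forall r, r < q -> nth 0 P r != j.-1]].
Proof.
case: j => [|[|x]] //=.
  case: ifP => // Hf [<-].
  exists (find (fun x => x != 0) P).-1; split => //.
    have := find_size (fun x => x != 0) P; move: Hf.
    by case: (find _ _).
  left; split => //.
  have := @before_find _ 0 (fun x => x != 0) P (find (fun x => x != 0) P).-1.
  move: Hf; case: (find _ _) => //= n _ /(_ (ltnSn n)).
  by move/negbFE/eqP.
case: ifP => // Hin [<-]; exists (index x.+1 P); split => //.
  by rewrite index_mem.
right; split => //; first by rewrite nth_index.
move=> r Hr; have := @before_find _ 0 (pred1 x.+1) P r Hr.
by move=> /= ->.
Qed.

Definition InvP (A P : seq nat) :=
  (forall r, nth 0 A r <= nth 0 P r) /\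
  (forall r r' j, 2 <= j -> nth 0 A r < j -> j <= nth 0 P r -> r' < r ->
     nth 0 A r' = j.-1 -> j <= nth 0 P r').

Lemma inv_pact A w P : pact w A = Some P -> InvP A P.
Proof.
elim: w P => [|x w IH] P /=.
  case=> <-; split => // r r' j _ H1 H2; move: H1 H2; lia.
rewrite -/(pact w A); case E: (pact w A) => [R|] //= HR.
have [H1 H2] := IH R E.
have [q [-> Hq Hc]] := pt_spec HR.
split.
  by move=> r; rewrite nth_incr_nth; apply: leq_trans (H1 r) (leq_addl _ _).
move=> r r' j Hj Ha Hb Hrr Har.
have HR' : j <= nth 0 R r' -> j <= nth 0 (incr_nth R q) r'.
  by move=> Hj'; rewrite nth_incr_nth; apply: leq_trans Hj' (leq_addl _ _).
apply: HR'.
move: Hb; rewrite nth_incr_nth.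
case: (eqVneq q r) => [Eqr|Nqr] /=; last first.
  by rewrite add0n => Hb; apply: H2 Hb Hrr Har.
subst q.
case: (leqP j (nth 0 R r)) => [Hb _|Hlt Hb]; first by apply: H2 Hb Hrr Har.
have Ejr : nth 0 R r = j.-1 by move: Hlt Hb; lia.
case: Hc => [[Ex Hz]|[Hx2 Hn Hbef]].
  by move: Ejr Hj; rewrite Hz; lia.
have Hne := Hbef r' Hrr.
have := H1 r'; rewrite Har => Hle.
have Hjx : x.-1 = j.-1 by rewrite -Ejr -Hn.
rewrite Hjx in Hne; move/eqP: Hne => Hne; lia.
Qed.

Lemma cover_top g d : composition g -> coverc g d -> exists j, top j g = Some d.
Proof.
move=> Hg [->|[k [Hk [-> Hb]]]]; first by exists 1.
have Hpos : 0 < nth 0 g k by move/(all_nthP 0): Hg; apply.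
exists (nth 0 g k).+1.
case E: (nth 0 g k) Hpos => [|y] // _ /=.
have Hin : y.+1 \in g by rewrite -E mem_nth.
rewrite Hin; congr (Some (incr_nth g _)).
apply: index_eq_spec => // i Hi; rewrite -E; exact: Hb.
Qed.

Lemma ltc_act a b : composition a -> ltc a b -> exists w, act_word w a = Some b.
Proof.
move=> Ha H; elim: H Ha => [g d Hc|g d e Hc _ IH] Hg.
  have [j Hj] := cover_top Hg Hc; by exists [:: j].
have [j Hj] := cover_top Hg Hc.
have [Hd _ _] := top_pos Hg Hj.
have [w Hw] := IH Hd.
exists (w ++ [:: j]); by rewrite act_cat /= Hj.
Qed.

Lemma nseqSr (T : Type) k (x : T) : nseq k.+1 x = nseq k x ++ [:: x].
Proof. by elim: k => //= k <-. Qed.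

Lemma COL v (P : seq nat) (p : pred nat) : 0 < v ->
  (forall r, r < size P -> p r -> nth 0 P r = v) ->
  (forall r r', r < size P -> p r -> r' < r -> nth 0 P r' = v -> p r') ->
  pact (nseq (count p (iota 0 (size P))) v.+1) P =
    Some (mkseq (fun r => nth 0 P r + p r) (size P)).
Proof.
move=> Hv; move Hk: (count _ _) => k.
elim: k P p Hk => [|k IH] P p Hk H1 H2.
  congr Some; apply: (@eq_from_nth _ 0); first by rewrite size_mkseq.
  move=> r Hr; rewrite nth_mkseq //.
  have : ~~ has p (iota 0 (size P)) by rewrite has_count Hk.
  move/hasPn => /(_ r); rewrite mem_iota /= add0n Hr => /(_ erefl) /negbTE ->.
  by rewrite addn0.
have Hhas : has p (iota 0 (size P)) by rewrite has_count Hk.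
set m := find p (iota 0 (size P)).
have Hm : m < size P by have := has_find p (iota 0 (size P)); rewrite size_iota Hhas.
have Hpm : p m.
  by have := nth_find 0 Hhas; rewrite nth_iota.
have Hbm : forall r, r < m -> ~~ p r.
  move=> r Hr; have := @before_find _ 0 p _ r Hr.
  by rewrite nth_iota ?(ltn_trans Hr) // => ->.
have HPm := H1 m Hm Hpm.
case: v Hv H1 H2 HPm IH => [|v] // _ H1 H2 HPm IH.
have Hidx : index v.+1 P = m.
  apply: index_eq_spec => // r Hr; apply/eqP => Er.
  by move: (Hbm r Hr); rewrite (H2 m r Hm Hpm Hr Er).
rewrite nseqSr pact_cat /=.
have -> : (v.+1 \in P) by rewrite -HPm mem_nth.
rewrite Hidx.
set P' := incr_nth P m.
have HsP : size P' = size P by rewrite /P' size_incr_nth Hm.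
set p' := fun r => p r && (r != m).
have Hcnt : count p' (iota 0 (size P')) = k.
  rewrite HsP; apply/eqP; rewrite -(eqn_add2r 1) !addn1 -Hk; apply/eqP.
  have := count_predUI p' (pred1 m) (iota 0 (size P)).
  rewrite (@eq_count _ (predU p' (pred1 m)) p); last first.
    by move=> r /=; rewrite /p'; case: (eqVneq r m) => [->|] /=; rewrite ?Hpm ?orbF ?andbT ?orbT.
  rewrite (@eq_count _ (predI p' (pred1 m)) pred0); last first.
    move=> r /=; rewrite /p'; case: (eqVneq r m) => [->|] /=; rewrite ?andbF ?andbT //.
  rewrite count_pred0 addn0 => ->; rewrite -addn1; congr addn.
  by rewrite count_uniq_mem ?iota_uniq // mem_iota add0n Hm.
have := IH P' p' Hcnt.
rewrite /= HsP => ->.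
- congr Some; apply: eq_mkseq => r; rewrite /P' /p' nth_incr_nth.
  case: (eqVneq m r) => [Em|Nm].
    by rewrite -Em Hpm /= addn0 add1n addn1.
  by rewrite andbT add0n.
- move=> r; rewrite /p' /P' nth_incr_nth => Hr /andP [Hpr Hrm].
  by rewrite eq_sym (negbTE Hrm) add0n H1.
- move=> r r'; rewrite /p' /P' nth_incr_nth => Hr /andP [Hpr Hrm] Hrr.
  case: (eqVneq m r') => [Em|Nm]; first by rewrite -Em HPm /= => E; lia.
  by rewrite add0n => E; rewrite (H2 r r' Hr Hpr Hrr E).
Qed.

Lemma COL1 z Qs : composition Qs ->
  pact (nseq z 1) (nseq z 0 ++ Qs) = Some (nseq z 1 ++ Qs).
Proof.
move=> HQ.
suff H : forall k, k <= z -> pact (nseq k 1) (nseq z 0 ++ Qs) = Some (nseq (z - k) 0 ++ nseq k 1 ++ Qs).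
  by rewrite H // subnn.
elim=> [|k IH] Hk /=; first by rewrite subn0.
rewrite -/(pact _ _) IH ?(ltnW Hk) //=.
have Hc : composition (nseq k 1 ++ Qs) by move: HQ; rewrite /composition all_cat all_nseq orbT => ->.
rewrite find_pad //.
have -> : z - k = (z - k.+1).+1 by lia.
by rewrite incr_nth_pad0.
Qed.

Lemma nth_le_sumn (s : seq nat) i : nth 0 s i <= sumn s.
Proof. elim: s i => [|x s IH] [|i] //=; [exact: leq_addr | exact: leq_trans (IH i) (leq_addl _ _)]. Qed.

Lemma eq_in_mkseq (f g : nat -> nat) n : (forall i, i < n -> f i = g i) -> mkseq f n = mkseq g n.
Proof.
move=> H; apply: (@eq_from_nth _ 0); rewrite !size_mkseq // => i Hi.
by rewrite !nth_mkseq // H.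
Qed.

Lemma sorted_nseq_cat m x s : sorted leq s -> all (leq x) s -> sorted leq (nseq m x ++ s).
Proof.
move=> Hs Ha; elim: m => //= m IH.
rewrite (path_sortedE leq_trans) IH andbT all_cat Ha andbT all_nseq leqnn orbT //.
Qed.

Lemma count_lt_iota z n : count (fun r => r < z) (iota 0 n) = minn z n.
Proof.
elim: n => [|n IH]; first by rewrite minn0.
rewrite -addn1 iotaD count_cat IH /= add0n addn0; lia.
Qed.

Section Core.
Variables alpha beta : seq nat.
Hypothesis Hal : composition alpha.
Hypothesis Hbe : composition beta.
Hypothesis Hsz : size alpha <= size beta.

Definition NN := size beta.
Definition off := size beta - size alpha.
Definition AA := nseq off 0 ++ alpha.
Definition sk r j := (nth 0 AA r < j) && (j <= nth 0 beta r).
Definition colP j := has (fun r => sk r j) (iota 0 NN).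

Hypothesis HAB : forall r, nth 0 AA r <= nth 0 beta r.
Hypothesis HF1 : forall r r' j, 2 <= j -> sk r j -> r' < r -> nth 0 AA r' = j.-1 -> j <= nth 0 beta r'.
Hypothesis HN2 : forall r r', sk r 1 -> sk r 2 -> sk r' 1 -> r' <= r.
Hypothesis HN3 : forall r r' j, 2 <= j -> sk r j -> sk r j.+1 -> sk r' j -> r <= r'.
Hypothesis Hint : forall x y z, x <= y <= z -> colP x -> colP z -> colP y.
Hypothesis Hne : exists j, colP j.

Lemma sizeA : size AA = NN.
Proof. by rewrite /AA size_cat size_nseq /off /NN subnK. Qed.

Lemma Bpos r : r < NN -> 0 < nth 0 beta r.
Proof. by move=> Hr; move/(all_nthP 0): Hbe; apply. Qed.

Lemma sk_lt r j : sk r j -> r < NN.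
Proof.
case/andP => H1 H2; rewrite ltnNge; apply/negP => Hr.
by move: H2; rewrite nth_default //; move: H1; case: j.
Qed.

Lemma sk_pos r j : sk r j -> 0 < j.
Proof. by case/andP => H1 _; apply: leq_ltn_trans H1. Qed.

Lemma colPP j : reflect (exists r, sk r j) (colP j).
Proof.
apply: (iffP hasP) => [[r _ H]|[r H]]; first by exists r.
by exists r => //; rewrite mem_iota add0n (sk_lt H).
Qed.

Lemma nthA r : nth 0 AA r = if r < off then 0 else nth 0 alpha (r - off).
Proof. by rewrite /AA nth_cat size_nseq nth_nseq; case: (r < off). Qed.

Lemma sk1 r : sk r 1 = (r < off).
Proof.
rewrite /sk nthA; case: ifP => Hr /=.
  by apply: Bpos; apply: leq_trans Hr _; rewrite /off /NN leq_subr.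
case: (ltnP r NN) => HrN.
  have : 0 < nth 0 alpha (r - off).
    move/(all_nthP 0): Hal; apply; move: Hr HrN; rewrite /off /NN; lia.
  by case: (nth 0 alpha _).
by rewrite (nth_default _ HrN) andbF.
Qed.

Lemma colbound j : colP j -> j <= sumn beta.
Proof. by case/colPP => r /andP [_ H]; apply: leq_trans H (nth_le_sumn _ _). Qed.

Definition dd := ex_maxn Hne colbound.

Lemma d_col : colP dd.
Proof. by rewrite /dd; case: ex_maxnP. Qed.

Lemma d_max j : colP j -> j <= dd.
Proof. by rewrite /dd; case: ex_maxnP => i _ H; apply: H. Qed.

Lemma sk_le_d r j : sk r j -> j <= dd.
Proof. by move=> H; apply: d_max; apply/colPP; exists r. Qed.

Lemma d_pos : 0 < dd.
Proof. by case/colPP: d_col => r /sk_pos. Qed.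

Definition srow j := if j == 1 then off.-1 else find (fun r => sk r j) (iota 0 NN).

Lemma srow_min j r : 2 <= j -> r < srow j -> ~~ sk r j.
Proof.
rewrite /srow; case: (eqVneq j 1) => [->//|_] _ Hr.
have Hr2 : r < NN.
  by apply: leq_trans Hr _; rewrite -[X in _ <= X](size_iota 0) find_size.
by have := @before_find _ 0 (fun r => sk r j) _ r Hr; rewrite nth_iota // => ->.
Qed.

Lemma srow_sk j : 2 <= j -> colP j -> sk (srow j) j.
Proof.
rewrite /srow; case: (eqVneq j 1) => [->//|_] _ Hc.
have Hf : find (fun r => sk r j) (iota 0 NN) < NN.
  by have := has_find (fun r => sk r j) (iota 0 NN); rewrite size_iota; move: Hc; rewrite /colP => ->.
by have := nth_find 0 Hc; rewrite nth_iota.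
Qed.

Definition isS r j := [&& sk r j, r == srow j & (j == dd) || sk r j.+1].
Definition inS j := isS (srow j) j.

Lemma isS_sk r j : isS r j -> sk r j.
Proof. by case/and3P. Qed.
Lemma isS_srow r j : isS r j -> r = srow j.
Proof. by case/and3P => _ /eqP. Qed.
Lemma isS_inS r j : isS r j -> inS j.
Proof. by move=> H; rewrite /inS -(isS_srow H). Qed.

Lemma ADJ r j : sk r j -> sk r j.+1 -> isS r j.
Proof.
move=> H1 H2; rewrite /isS H1 H2 orbT andbT /=.
case: j H1 H2 => [|[|j]] H1 H2.
- by move: H1; rewrite /sk ltn0.
- rewrite /srow /=.
  have Hr : r < off by rewrite -sk1.
  have Ho : sk off.-1 1 by rewrite sk1; move: Hr; lia.
  have := HN2 H1 H2 Ho; move: Hr; lia.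
- have Hc : colP j.+2 by apply/colPP; exists r.
  have Hs := srow_sk (isT : 2 <= j.+2) Hc.
  have Hle := HN3 (isT : 2 <= j.+2) H1 H2 Hs.
  case: (ltnP r (srow j.+2)) => Hlt.
    by move: (srow_min (isT : 2 <= j.+2) Hlt); rewrite H1.
  by rewrite eqn_leq Hle Hlt.
Qed.

Lemma PREF r j i : isS r j -> nth 0 AA r < i <= j -> isS r i.
Proof.
move=> HS /andP [Hi Hij].
suff H : forall k, nth 0 AA r < j - k -> isS r (j - k).
  by have := H (j - i); rewrite (_ : j - (j - i) = i); [apply|lia].
elim=> [|k IH] Hk; first by rewrite subn0.
have Hi' : nth 0 AA r < j - k by move: Hk; lia.
have HSk := IH Hi'.
have E : (j - k.+1).+1 = j - k by move: Hk; lia.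
apply: ADJ; last by rewrite E; exact: isS_sk HSk.
have := isS_sk HSk; rewrite /sk => /andP [_ H]; rewrite Hk /=; move: H; lia.
Qed.

Fixpoint V s r := match s with 0 => nth 0 AA r | s'.+1 => if isS r s' then s' else V s' r end.

Lemma V_ge s r : nth 0 AA r <= V s r.
Proof.
elim: s => //= s IH; case: ifP => // /isS_sk /andP [H _]; exact: ltnW.
Qed.

Lemma V_cases s r : V s r = nth 0 AA r \/ (isS r (V s r) /\ V s r < s).
Proof.
elim: s => [|s IH] /=; first by left.
case: ifP => H; first by right.
by case: IH => [->|[H1 H2]]; [left|right; split => //; apply: ltn_trans H2 _].
Qed.

Lemma V_isS s r j : isS r j -> j < s -> j <= V s r.
Proof.
move=> H; elim: s => [|s IH] //= Hs.
case: ifP => Hr; first by move: Hs; rewrite ltnS.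
case: (ltnP j s) => Hjs; first exact: IH.
have Ejs : j = s by move: Hs Hjs; lia.
by move: Hr; rewrite -Ejs H.
Qed.

Lemma V_le s r : V s r <= nth 0 beta r.
Proof.
case: (V_cases s r) => [->|[H _]]; first exact: HAB.
by case/andP: (isS_sk H).
Qed.

Lemma V_S s r : isS r s -> V s r = s.-1.
Proof.
move=> HS; have Hsk := isS_sk HS.
have Hlt : V s r < s.
  by case: (V_cases s r) => [->|[_ H]] //; case/andP: Hsk.
apply/eqP; rewrite eqn_leq; apply/andP; split; first by move: Hlt; lia.
case: (ltnP (nth 0 AA r) s.-1) => Ha.
  have HS' : isS r s.-1 by apply: (PREF HS); rewrite Ha /=; lia.
  apply: V_isS HS' _; move: Ha; lia.
exact: leq_trans Ha (V_ge _ _).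
Qed.

Lemma V_nS s r q : 2 <= s -> isS q s -> r < q -> V s r != s.-1.
Proof.
move=> Hs HS Hrq; apply/eqP => E.
have Hq := isS_srow HS.
have Hsk := isS_sk HS.
have Hnot : ~~ sk r s by apply: srow_min; rewrite // -Hq.
case: (V_cases s r) => [EA|[HS' _]].
  have := HF1 Hs Hsk Hrq; rewrite -EA E => /(_ erefl) Hb.
  by move: Hnot; rewrite /sk -EA E Hb andbT; move: Hs; lia.
move: HS'; rewrite E /isS => /and3P [_ _ /orP [Ed|Hk]].
  have := sk_le_d Hsk; move/eqP: Ed; lia.
by move: Hk; rewrite (_ : s.-1.+1 = s) ?(negbTE Hnot) //; lia.
Qed.

Definition SSeq s := mkseq (V s) NN.

Lemma SSeq1 : SSeq 1 = AA.
Proof.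
rewrite /SSeq /=; rewrite -{2}(mkseq_nth 0 AA) sizeA; apply: eq_mkseq => r.
by [].
Qed.

Lemma Sskip s : ~~ inS s -> SSeq s.+1 = SSeq s.
Proof.
move=> Hn; apply: eq_mkseq => r /=; case: ifP => // H.
by move: Hn; rewrite (isS_inS H).
Qed.

Lemma findA : find (fun x => x != 0) AA = off.
Proof. exact: find_pad. Qed.

Lemma Sstep s : inS s -> pt s (SSeq s) = Some (SSeq s.+1).
Proof.
move=> HS.
have Hsk := isS_sk HS.
have HqN := sk_lt Hsk.
case: s HS Hsk HqN => [|[|x]] HS Hsk HqN.
- by move: Hsk; rewrite /sk ltn0.
- have Hoff : 0 < off by move: Hsk; rewrite sk1 /srow /=; lia.
  have Hsr : srow 1 = off.-1 by [].
  rewrite /= SSeq1 findA (negbTE (lt0n_neq0 Hoff)).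
  have HoN : off.-1 < size AA by rewrite sizeA -Hsr.
  congr Some; apply: (@eq_from_nth _ 0).
    by rewrite size_incr_nth HoN size_mkseq sizeA.
  move=> r; rewrite size_incr_nth HoN sizeA => Hr.
  rewrite nth_incr_nth nth_mkseq //=.
  case: (eqVneq off.-1 r) => [Er|Nr].
    have HS' : isS off.-1 1 := HS; rewrite -Er HS' nthA ifT //; lia.
  rewrite add0n; case: ifP => // H; move: Nr; by rewrite (isS_srow H) Hsr eqxx.
- set q := srow x.+2.
  have Hq : isS q x.+2 by [].
  have HV : V x.+2 q = x.+1 by rewrite V_S.
  have Hidx : index x.+1 (SSeq x.+2) = q.
    apply: index_eq_spec; first by rewrite size_mkseq.
      by rewrite nth_mkseq.
    move=> k Hk; rewrite nth_mkseq; last by apply: ltn_trans Hk HqN.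
    exact: (V_nS (isT : 2 <= x.+2) Hq Hk).
  have Hin : x.+1 \in SSeq x.+2.
    by apply/(nthP 0); exists q; rewrite ?size_mkseq // nth_mkseq.
  rewrite /pt Hin Hidx; congr Some; apply: (@eq_from_nth _ 0).
    by rewrite size_incr_nth size_mkseq HqN size_mkseq.
  move=> r; rewrite size_incr_nth size_mkseq HqN => Hr.
  rewrite nth_incr_nth !nth_mkseq // [V x.+3 r]/=.
  case: (eqVneq q r) => [Er|Nr].
    by rewrite -Er Hq HV.
  rewrite add0n; case: ifP => // H; move: Nr; by rewrite (isS_srow H) eqxx.
Qed.


Definition Swk k := [seq s <- rev (iota 1 k) | inS s].

Lemma Swk_S k : Swk k.+1 = if inS k.+1 then k.+1 :: Swk k else Swk k.
Proof.
have E : iota 1 k.+1 = iota 1 k ++ [:: k.+1].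
  by rewrite -[in LHS](addn1 k) iotaD add1n.
by rewrite /Swk E rev_cat.
Qed.

Lemma S_phase k : pact (Swk k) AA = Some (SSeq k.+1).
Proof.
elim: k => [|k IH]; first by rewrite SSeq1.
rewrite Swk_S; case: ifP => H.
  rewrite /= -/(pact _ _) IH; exact: Sstep.
by rewrite IH (@Sskip k.+1) // H.
Qed.

Definition T r := V dd.+1 r.

Lemma T_ge r : nth 0 AA r <= T r. Proof. exact: V_ge. Qed.
Lemma T_le r : T r <= nth 0 beta r. Proof. exact: V_le. Qed.
Lemma T_isS r j : isS r j -> j <= T r.
Proof. move=> H; apply: (V_isS H); rewrite ltnS; exact: sk_le_d (isS_sk H). Qed.
Lemma T_cases r : T r = nth 0 AA r \/ isS r (T r).
Proof. by rewrite /T; case: (V_cases dd.+1 r) => [->|[H _]]; [left|right]. Qed.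

Definition pcol j r := sk r j && ~~ isS r j.

Lemma pcol_B j r : pcol j r -> nth 0 beta r = j.
Proof.
case/andP => Hs Hn; have := Hs; rewrite /sk => /andP [H1 H2].
apply/eqP; rewrite eqn_leq H2 andbT leqNgt; apply/negP => H3.
by move: Hn; rewrite ADJ // /sk H3 andbT; move: H1; lia.
Qed.

Lemma isS_pred r j : sk r j -> nth 0 AA r < j.-1 -> isS r j.-1.
Proof.
move=> Hs Ha; apply: ADJ.
  by rewrite /sk Ha /=; case/andP: Hs => _; lia.
by rewrite (_ : j.-1.+1 = j) //; move: Ha; lia.
Qed.

Lemma pcol_T j r : pcol j r -> T r = j.-1.
Proof.
move=> Hp; have HB := pcol_B Hp; case/andP: Hp => Hs Hn.
have Hlow : j.-1 <= T r.
  case: (ltnP (nth 0 AA r) j.-1) => Ha.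
    exact: T_isS (isS_pred Hs Ha).
  exact: leq_trans Ha (T_ge r).
have Hup : T r != j.
  apply/eqP => E; case: (T_cases r) => [EA|HS].
    by move: Hs; rewrite /sk -EA E ltnn.
  by move: Hn; rewrite -E HS.
have := T_le r; rewrite HB; move: Hlow Hup; lia.
Qed.

Lemma npcol_T j r : nth 0 beta r = j -> ~~ pcol j r -> T r = j.
Proof.
move=> HB; rewrite /pcol negb_and negbK => /orP [Hs|HS].
  have HA : nth 0 AA r = j.
    by move: Hs (HAB r); rewrite /sk HB leqnn andbT -leqNgt; lia.
  by have := T_ge r; have := T_le r; rewrite HA HB; lia.
by have := T_isS HS; have := T_le r; rewrite HB; lia.
Qed.

Definition Q j := mkseq (fun r => if j <= nth 0 beta r then nth 0 beta r else T r) NN.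

Lemma Qd : Q dd.+1 = SSeq dd.+1.
Proof.
apply: eq_in_mkseq => r Hr; case: ifP => // Hd.
have HA : nth 0 AA r = nth 0 beta r.
  apply/eqP; rewrite eqn_leq HAB /= leqNgt; apply/negP => Hlt.
  have : sk r (nth 0 beta r) by rewrite /sk Hlt leqnn.
  by move/sk_le_d; rewrite leqNgt Hd.
by apply/eqP; rewrite eqn_leq T_le /= -HA T_ge.
Qed.

Lemma Q1 : Q 1 = beta.
Proof.
rewrite -{1}(mkseq_nth 0 beta) /Q; apply: eq_in_mkseq => r Hr.
by rewrite Bpos.
Qed.

Definition mcount j := count (pcol j) (iota 0 NN).

Lemma Mstep j : 2 <= j -> j <= dd -> pact (nseq (mcount j) j) (Q j.+1) = Some (Q j).
Proof.
move=> Hj Hjd.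
have Hv : 0 < j.-1 by move: Hj; lia.
have HsQ : size (Q j.+1) = NN by rewrite size_mkseq.
have H1 : forall r, r < size (Q j.+1) -> pcol j r -> nth 0 (Q j.+1) r = j.-1.
  move=> r Hr Hp; rewrite nth_mkseq -?HsQ // (pcol_B Hp) ltnn.
  exact: pcol_T.
have H2 : forall r r', r < size (Q j.+1) -> pcol j r -> r' < r ->
    nth 0 (Q j.+1) r' = j.-1 -> pcol j r'.
  move=> r r' Hr Hp Hrr; rewrite HsQ in Hr.
  have Hr' : r' < NN by apply: ltn_trans Hrr Hr.
  rewrite nth_mkseq //; case: ifP => HB; first by move: HB; lia.
  move=> ET.
  case: (ltnP (nth 0 beta r') j) => HBj; last first.
    have EB : nth 0 beta r' = j by move: HB HBj; lia.
    apply/andP; split.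
      by rewrite /sk EB leqnn andbT; have := T_ge r'; rewrite ET; move: Hj; lia.
    by apply/negP => HS; have := T_isS HS; rewrite ET; move: Hj; lia.
  have EB : nth 0 beta r' = j.-1 by have := T_le r'; rewrite ET; move: HBj; lia.
  case: (T_cases r') => [EA|HS].
    have Hsk : sk r j by case/andP: Hp.
    have := HF1 Hj Hsk Hrr; rewrite -EA ET => /(_ erefl).
    by rewrite EB; move: Hj; lia.
  move: HS; rewrite ET /isS => /and3P [_ _ /orP [Ed|Hk]].
    by move/eqP: Ed; move: Hjd Hj; lia.
  by move: Hk; rewrite (_ : j.-1.+1 = j); [rewrite /sk EB; lia|lia].
have := COL Hv H1 H2.
rewrite HsQ (_ : j.-1.+1 = j); last by move: Hj; lia.
rewrite -/(mcount j) => ->; congr Some.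
apply: eq_in_mkseq => r Hr; rewrite nth_mkseq //.
case: (ltngtP (nth 0 beta r) j) => HB.
- case E: (pcol j r); last by rewrite addn0.
  by have := pcol_B E; move: HB; lia.
- case E: (pcol j r); last by rewrite addn0.
  by have := pcol_B E; move: HB; lia.
- case E: (pcol j r); first by rewrite (pcol_T E); move: Hj; lia.
  by rewrite (npcol_T HB (negbT E)) addn0.
Qed.

Definition z1 := off - inS 1.

Lemma pcol1 r : r < NN -> pcol 1 r = (r < z1).
Proof.
move=> Hr; rewrite /pcol sk1 /z1.
have Hs1 : srow 1 = off.-1 by [].
case HI: (inS 1).
  have Hoff : 0 < off by move: (isS_sk HI); rewrite sk1 Hs1; lia.
  case: (eqVneq r off.-1) => [Er|Nr].
    have HI' : isS off.-1 1 := HI; rewrite Er HI' /=; lia.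
  have -> : isS r 1 = false.
    by apply/negP => H; move: Nr; rewrite (isS_srow H) Hs1 eqxx.
  by rewrite andbT; move: Nr => /eqP; lia.
have -> : isS r 1 = false by apply/negP => H; move: HI; rewrite (isS_inS H).
by rewrite andbT subn0.
Qed.

Lemma z1_le : z1 <= NN.
Proof. by rewrite /z1 /off /NN; lia. Qed.

Lemma Mstep1 : pact (nseq (mcount 1) 1) (Q 2) = Some (Q 1).
Proof.
have Hm : mcount 1 = z1.
  rewrite /mcount (@eq_in_count _ _ (fun r => r < z1)).
    by rewrite count_lt_iota; move: z1_le; lia.
  by move=> r; rewrite mem_iota add0n /= => Hr; rewrite pcol1.
have HD : composition (drop z1 beta).
  by apply/allP => x /mem_drop Hx; move/allP: Hbe; apply.
have E2 : Q 2 = nseq z1 0 ++ drop z1 beta.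
  apply: (@eq_from_nth _ 0).
    by rewrite size_mkseq size_cat size_nseq size_drop /NN; move: z1_le; rewrite /NN; lia.
  move=> r; rewrite size_mkseq => Hr; rewrite nth_mkseq // nth_cat size_nseq nth_nseq.
  case: (ltnP r z1) => Hz.
    have Hp : pcol 1 r by rewrite pcol1.
    by rewrite (pcol_B Hp) (pcol_T Hp).
  rewrite nth_drop (_ : z1 + (r - z1) = r); last by move: Hz; lia.
  case: ifP => // HB.
  have EB : nth 0 beta r = 1 by have := Bpos Hr; move: HB; lia.
  rewrite EB; apply: npcol_T => //; by rewrite pcol1 // -leqNgt.
have E1 : beta = nseq z1 1 ++ drop z1 beta.
  apply: (@eq_from_nth _ 0).
    by rewrite size_cat size_nseq size_drop; move: z1_le; rewrite /NN; lia.
  move=> r Hr; rewrite nth_cat size_nseq nth_nseq.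
  case: (ltnP r z1) => Hz.
    by apply: pcol_B; rewrite pcol1.
  by rewrite nth_drop (_ : z1 + (r - z1) = r) //; move: Hz; lia.
by rewrite Hm E2 COL1 // -E1 Q1.
Qed.

Definition Mw j := flatten [seq nseq (mcount i) i | i <- iota j (dd.+1 - j)].

Lemma Mw_S j : j <= dd -> Mw j = nseq (mcount j) j ++ Mw j.+1.
Proof. by move=> Hj; rewrite /Mw subSn //= subSS. Qed.

Lemma M_phase k : k <= dd -> pact (Mw (dd.+1 - k)) (Q dd.+1) = Some (Q (dd.+1 - k)).
Proof.
elim: k => [|k IH] Hk.
  by rewrite subn0 /Mw subnn.
have Hj : dd.+1 - k.+1 <= dd by lia.
rewrite Mw_S // pact_cat (_ : (dd.+1 - k.+1).+1 = dd.+1 - k); last by lia.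
rewrite IH ?(ltnW Hk) //= (_ : dd.+1 - k = (dd.+1 - k.+1).+1); last by lia.
case: (ltnP 1 (dd.+1 - k.+1)) => H.
  by apply: Mstep.
have -> : dd.+1 - k.+1 = 1 by lia.
exact: Mstep1.
Qed.

Definition canon := Mw 1 ++ Swk dd.

Lemma canon_pact : pact canon AA = Some beta.
Proof.
rewrite /canon pact_cat S_phase /= -Qd.
have := M_phase (leqnn dd); rewrite subSnn => ->.
by rewrite Q1.
Qed.


Lemma srow_sk_all j : colP j -> sk (srow j) j.
Proof.
case: j => [|[|j]] Hc.
- by case/colPP: Hc => r /sk_pos.
- case/colPP: Hc => r; rewrite sk1 => Hr.
  by rewrite /srow /= sk1; move: Hr; lia.
- exact: srow_sk.
Qed.

Lemma inS_d : inS dd.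
Proof. apply/and3P; split; [exact: srow_sk_all d_col | exact: eqxx | by rewrite eqxx]. Qed.
Lemma Swk_d : Swk dd = dd :: Swk dd.-1.
Proof.
have E : dd = dd.-1.+1 by have := d_pos; lia.
by rewrite {1}E Swk_S -E inS_d.
Qed.

Lemma mem_Swk y : (y \in Swk dd) = inS y && (0 < y <= dd).
Proof. by rewrite /Swk mem_filter mem_rev mem_iota add1n ltnS. Qed.

Lemma mem_Mw y : y \in Mw 1 -> (0 < mcount y) && (0 < y <= dd).
Proof.
case/flatten_mapP => i; rewrite mem_iota add1n subn1 /= => Hi.
by rewrite mem_nseq => /andP [Hm /eqP ->]; rewrite Hm.
Qed.

Lemma canon_col y : y \in canon -> colP y.
Proof.
rewrite mem_cat => /orP [/mem_Mw /andP [Hm _]|].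
  move: Hm; rewrite /mcount -has_count => /hasP [r _ /andP [Hs _]].
  by apply/colPP; exists r.
rewrite mem_Swk => /andP [HS _]; apply/colPP; exists (srow y); exact: isS_sk HS.
Qed.

Lemma col_canon y : colP y -> y \in canon.
Proof.
move=> Hc; have Hs := srow_sk_all Hc.
have Hy : 0 < y <= dd by rewrite (sk_pos Hs) (sk_le_d Hs).
rewrite mem_cat; case HI: (inS y).
  by rewrite mem_Swk HI Hy orbT.
apply/orP; left; apply/flatten_mapP; exists y.
  by rewrite mem_iota add1n subn1 ltnS.
rewrite mem_nseq eqxx andbT /mcount -has_count; case/colPP: Hc => r Hr.
apply/hasP; exists r; first by rewrite mem_iota add0n (sk_lt Hr).
rewrite /pcol Hr /=; apply/negP => H; move: HI; by rewrite (isS_inS H).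
Qed.

Lemma Mw_props k : k <= dd ->
  [/\ sorted leq (Mw (dd.+1 - k) ++ [:: dd]), all (leq (dd.+1 - k)) (Mw (dd.+1 - k))
    & all (fun x => x <= dd) (Mw (dd.+1 - k))].
Proof.
elim: k => [|k IH] Hk; first by rewrite subn0 /Mw subnn.
have [H1 H2 H3] := IH (ltnW Hk).
have Hj : dd.+1 - k.+1 <= dd by lia.
rewrite Mw_S // (_ : (dd.+1 - k.+1).+1 = dd.+1 - k); last by lia.
split.
- rewrite -catA; apply: sorted_nseq_cat => //.
  rewrite all_cat /= Hj andbT.
  by rewrite andbT; apply: (sub_all _ H2) => x /=; lia.
- rewrite all_cat all_nseq leqnn orbT /=.
  by apply: (sub_all _ H2) => x /=; lia.
- by rewrite all_cat H3 andbT all_nseq Hj orbT.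
Qed.

Lemma canon_main : [/\ pact canon AA = Some beta, all (fun i => 0 < i) canon,
  reverse_hookword canon & connected_word canon].
Proof.
split.
- exact: canon_pact.
- by apply/allP => y /canon_col /colPP [r /sk_pos].
- exists (size (Mw 1)); have [H1 _ _] := Mw_props (leqnn dd); rewrite subSnn in H1.
  rewrite /canon Swk_d size_cat /= addnS ltnS leq_addr; split => //.
  split.
    by rewrite take_cat ltnNge leqnSn /= subSnn /= take0.
  rewrite drop_cat ltnn subnn drop0 -Swk_d /Swk.
  apply: sorted_filter; first by move=> a b c H H'; apply: ltn_trans H' H.
  by rewrite rev_sorted; exact: iota_ltn_sorted.
- move=> x y z Hx Hz Hxyz; apply: col_canon.
  exact: (Hint Hxyz (canon_col Hx) (canon_col Hz)).
Qed.

End Core.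

Lemma skew_eq alpha beta i j : size alpha <= size beta ->
  in_skew beta alpha i j = (0 < i) && sk alpha beta i.-1 j.
Proof.
move=> Hsz; rewrite /in_skew /in_diag /in_inner /sk nthA /off.
case: i => [|r] /=; first by [].
case: (ltnP r (size beta)) => HrN; last first.
  rewrite (nth_default 0 HrN); case: ifP => _; lia.
case: ifP => Hr.
  have -> : (size beta - size alpha < r.+1) = false by lia.
  rewrite /=; lia.
have -> : (r.+1 - (size beta - size alpha)).-1 = r - (size beta - size alpha) by lia.
lia.
Qed.

Lemma sum_gt a m : \sum_(1 <= j < m.+1) ((a < j) : nat) = m - a.
Proof.
elim: m => [|m IH]; first by rewrite big_geq.
rewrite big_nat_recr //= IH; case: (ltnP a m.+1) => H /=; lia.
Qed.

Lemma sumn_big (s : seq nat) : \sum_(0 <= i < size s) nth 0 s i = sumn s.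
Proof.
elim: s => [|x s IH]; first by rewrite big_geq.
by rewrite /= big_nat_recl //= IH.
Qed.

Lemma skew_size_eq alpha beta : size alpha <= size beta ->
  (forall r, nth 0 (AA alpha beta) r <= nth 0 beta r) ->
  skew_size beta alpha = sumn beta - sumn alpha.
Proof.
move=> Hsz HAB; rewrite /skew_size.
rewrite (@eq_big_nat _ _ _ 1 (size beta).+1 _
   (fun i => nth 0 beta i.-1 - nth 0 (AA alpha beta) i.-1)); last first.
  move=> i /andP [Hi _].
  rewrite -(sum_gt (nth 0 (AA alpha beta) i.-1)); apply: eq_big_nat => j /andP [Hj1 Hj2].
  rewrite skew_eq // Hi /sk /=; congr nat_of_bool; move: Hj2; rewrite ltnS => ->.
  by rewrite andbT.
rewrite big_add1 /=.
have HA : sumn (AA alpha beta) = sumn alpha by rewrite /AA sumn_cat sumn_nseq.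
have HsA : size (AA alpha beta) = size beta by rewrite sizeA.
rewrite -HA -(sumn_big beta) -(sumn_big (AA alpha beta)) HsA.
apply/eqP; rewrite -(eqn_add2r (\sum_(0 <= i < size beta) nth 0 (AA alpha beta) i)).
rewrite subnK; last by apply: leq_sum => i _; exact: HAB.
by rewrite -big_split /=; apply/eqP; apply: eq_bigr => i _; rewrite subnK.
Qed.

Lemma supp_col alpha beta j : size alpha <= size beta ->
  in_supp beta alpha j <-> colP alpha beta j.
Proof.
move=> Hsz; split.
  case=> i; rewrite skew_eq // => /andP [_ H]; apply/colPP; by exists i.-1.
case/colPP => r Hr; exists r.+1; by rewrite skew_eq.
Qed.

Unset Implicit Arguments.

Theorem mainTheorem6 (alpha beta : seq nat) (n : nat) :
  composition alpha -> 1 <= n -> ltc alpha beta ->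
  nc_border_strip beta alpha -> skew_size beta alpha = n ->
  exists w, CRHW n w /\ act_word w alpha = Some beta.
Proof.
move=> Ha Hn Hltc [Hint [HN2 HN3]] Hsk.
have [w0 Hw0] := ltc_act Ha Hltc.
have [Hbe Hsz _] := act_pos Ha Hw0.
have Hpad : pact w0 (AA alpha beta) = Some beta.
  have Hz : size beta <= (size beta - size alpha) + size alpha by rewrite subnK.
  have := act_pad Ha Hw0 Hz; rewrite subnK // subnn /= => ->.
  by [].
have [HAB HF1] := inv_pact Hpad.
have HF1' : forall r r' j, 2 <= j -> sk alpha beta r j -> r' < r ->
    nth 0 (AA alpha beta) r' = j.-1 -> j <= nth 0 beta r'.
  move=> r r' j Hj /andP [H1 H2]; exact: HF1.
have HN2' : forall r r', sk alpha beta r 1 -> sk alpha beta r 2 ->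
    sk alpha beta r' 1 -> r' <= r.
  move=> r r' H1 H2 H3.
  have := HN2 r.+1; rewrite !skew_eq //= => /(_ H1 H2 r'.+1).
  by rewrite skew_eq //= => /(_ H3).
have HN3' : forall r r' j, 2 <= j -> sk alpha beta r j -> sk alpha beta r j.+1 ->
    sk alpha beta r' j -> r <= r'.
  move=> r r' j Hj H1 H2 H3.
  have := HN3 r.+1 j Hj; rewrite !skew_eq //= => /(_ H1 H2 r'.+1).
  by rewrite skew_eq //= => /(_ H3).
have Hint' : forall x y z, x <= y <= z -> colP alpha beta x -> colP alpha beta z ->
    colP alpha beta y.
  move=> x y z Hxyz Hx Hz; apply/(supp_col _ Hsz).
  by apply: (Hint x y z Hxyz); apply/(supp_col _ Hsz).
have HAB' : forall r, nth 0 (AA alpha beta) r <= nth 0 beta r by move=> r; exact: HAB.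
have Hsz2 := skew_size_eq Hsz HAB'.
have Hne : exists j, colP alpha beta j.
  case Eh: (has (colP alpha beta) (iota 0 (sumn beta).+1)).
    by case/hasP: Eh => j _ Hj; exists j.
  exfalso.
  have Hno : forall j, ~~ colP alpha beta j.
    move=> j; apply/negP => Hj; move/hasP: Eh; apply; exists j => //.
    by rewrite mem_iota add0n ltnS (colbound Hj).
  have : skew_size beta alpha = 0.
    rewrite /skew_size big1 // => i _; rewrite big1 // => j _.
    case E: (in_skew beta alpha i j) => //.
    have : in_supp beta alpha j by exists i.
    by move/(supp_col _ Hsz); rewrite (negbTE (Hno j)).
  by rewrite Hsk; move: Hn; lia.
have [Hp Hpos Hhook Hconn] := canon_main Ha Hbe Hsz HAB' HF1' HN2' HN3' Hint' Hne.
have Hc : composition alpha := Ha.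
have [z' [Q' [EQ HQ]]] := pad_act Hc Hp.
have Ez : z' = 0.
  case: z' EQ => // z EQ; move: Hbe; rewrite /composition EQ /=; by [].
move: EQ; rewrite Ez /= => EQ; subst Q'.
exists (canon Hne); split => //.
split => //.
have [_ _ Hs] := act_pos Ha HQ.
by rewrite -Hsk Hsz2 Hs addKn.
Qed.
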